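(* Let $K$ be a field of characteristic zero and let $F\in K[x]^n$, $x=(x_1,\dots,x_n)$, be a Keller map. Suppose that for each $i$, $F_i=L_iH_i$ with $L_i,H_i\in K[x]$ and $\deg L_i=1$. Write $L=(L_1,\dots,L_n)$ and $L(0)=(L_1(0),\dots,L_n(0))\in K^n$. Then the following are equivalent: 1) for each $i$, the linear part (homogeneous part of degree $1$) of $L_i(0)H_i$ is divisible by $L_i-L_i(0)$; 2) $L(0)$ lies in the column space of the (constant) matrix $\mathcal{J}L$; 3) $\det\mathcal{J}L\in K^{*}$; 4) $\deg F=1$; 5) $F_i$ is irreducible for each $i$.
   Context: $\mathcal{J}$ denotes the Jacobian matrix with respect to $x$. A Keller map is a polynomial map $F\in K[x]^n$ with $\det\mathcal{J}F\in K^{*}$. *)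

(* Defs.v *)
From HB Require Import structures.
From mathcomp Require Import all_boot all_order all_algebra.
From mathcomp Require Export mpoly.
Set Implicit Arguments. Unset Strict Implicit. Unset Printing Implicit Defensive.
Import GRing.Theory.
Local Open Scope ring_scope.

(* total degree of a (nonzero) polynomial: msize p = deg p + 1 *)
Definition mdegree (n : nat) (R : nzRingType) (p : {mpoly R[n]}) : nat :=
  (msize p).-1.

Definition map_degree (n : nat) (R : nzRingType) (F : 'I_n -> {mpoly R[n]}) : nat :=
  \max_(i < n) mdegree (F i).

Definition jacobian (n : nat) (R : nzRingType) (F : 'I_n -> {mpoly R[n]}) :
  'M[{mpoly R[n]}]_n := \matrix_(i, j) (F i)^`M(j).

Definition keller (n : nat) (K : fieldType) (F : 'I_n -> {mpoly K[n]}) : Prop :=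
  exists2 c : K, c != 0 & \det (jacobian F) = c%:MP.

Definition mirreducible (n : nat) (K : fieldType) (p : {mpoly K[n]}) : Prop :=
  [/\ p != 0, p \isn't a GRing.unit &
      forall a b : {mpoly K[n]}, p = a * b -> a \is a GRing.unit \/ b \is a GRing.unit].

Definition at0 (n : nat) (R : nzRingType) (p : {mpoly R[n]}) : R :=
  p.@[fun _ => 0].

Definition linpart (n : nat) (R : nzRingType) (p : {mpoly R[n]}) : {mpoly R[n]} :=
  pihomog mdeg 1 p.

(* Main.v *)
Require Import Defs.
From HB Require Import structures.
From mathcomp Require Import all_boot all_order all_algebra.
From mathcomp Require Import mpoly.
From mathcomp Require Import perm ring lra zify.
Import Order.TTheory GRing.Theory Num.Theory.
Local Open Scope ring_scope.

Section Dom.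
Variables (K : fieldType) (n : nat) (w : 'I_n -> int).
Implicit Types (p q : {mpoly K[n]}) (m a b : 'X_{1..n}).

Definition wt m : int := \sum_j w j * (m j)%:Z.

Lemma wtD m1 m2 : wt (m1 + m2)%MM = wt m1 + wt m2.
Proof. by rewrite /wt -big_split; apply eq_bigr => j _; rewrite mnmDE PoszD mulrDr. Qed.

Lemma wt0 : wt 0%MM = 0.
Proof. by rewrite /wt big1 // => j _; rewrite mnm0E mulr0. Qed.

Definition dom p a := forall m, p@_m != 0 -> (m == a) || (wt m < wt a).

Lemma sum_pred1 (T : eqType) (r : seq T) (a : T) (F : T -> K) :
  uniq r -> (forall x, x \in r -> x != a -> F x = 0) -> (a \notin r -> F a = 0) ->
  \sum_(x <- r) F x = F a.
Proof.
move=> ur h0 h1; case: (boolP (a \in r)) => ar.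
  rewrite (bigD1_seq a) //= big1_seq ?addr0 // => x /andP[xa xr]; exact: h0.
rewrite h1 // big1_seq // => x /andP[_ xr]; apply: h0 => //.
by apply/eqP => e; move: ar; rewrite -e xr.
Qed.

Lemma mulE p q : p * q =
  \sum_(m <- msupp p) \sum_(m' <- msupp q) (p@_m * q@_m') *: 'X_[m + m'].
Proof.
rewrite {1}(mpolyE p) {1}(mpolyE q) big_distrl; apply eq_bigr => m _.
rewrite big_distrr; apply eq_bigr => m' _.
by rewrite /= -scalerAl -scalerAr scalerA mpolyXD.
Qed.

Lemma mcoeff_mulE p q g : (p * q)@_g =
  \sum_(m <- msupp p) \sum_(m' <- msupp q) (p@_m * q@_m') * ((m + m')%MM == g)%:R.
Proof.
rewrite mulE raddf_sum; apply eq_bigr => m _; rewrite raddf_sum; apply eq_bigr => m' _.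
by rewrite /= mcoeffZ mcoeffX.
Qed.

Lemma addmI2 m a b : (m + b)%MM = (a + b)%MM -> m = a.
Proof. by move=> /mnmP h; apply/mnmP => j; move: (h j); rewrite !mnmDE => /addIn. Qed.

Lemma dom_mul p q a b : dom p a -> dom q b ->
  (p * q)@_(a + b) = p@_a * q@_b /\ dom (p * q) (a + b).
Proof.
move=> dp dq.
have key m m' : p@_m != 0 -> q@_m' != 0 ->
    ((m == a) && (m' == b)) || (wt (m + m')%MM < wt (a + b)%MM).
  move=> /dp /orP[/eqP ->|lt1] /dq /orP[/eqP ->|lt2]; rewrite ?eqxx //= wtD wtD.
  - by apply/orP; right; rewrite ltrD2l.
  - by apply/orP; right; rewrite ltrD2r.
  - by apply/orP; right; exact: ltrD.
split.
  rewrite mcoeff_mulE (@sum_pred1 _ _ a) ?msupp_uniq //.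
  - rewrite (@sum_pred1 _ _ b) ?msupp_uniq ?eqxx ?mulr1 //.
      move=> x _ xb; have -> : ((a + x)%MM == (a + b)%MM) = false.
        apply/negbTE/eqP => e; move/eqP: xb; apply; apply: (addmI2 x b a).
        by rewrite addmC e addmC.
      by rewrite mulr0.
    by rewrite mcoeff_msupp negbK => /eqP ->; rewrite mulr0 ?mul0r.
  - move=> m mp ma; rewrite big1_seq // => m' /andP[_ m'q].
    have [e|ne] := eqVneq (m + m')%MM (a + b)%MM; last by rewrite mulr0.
    rewrite mcoeff_msupp in mp; rewrite mcoeff_msupp in m'q.
    by move: (key _ _ mp m'q); rewrite (negbTE ma) e ltxx.
  - rewrite mcoeff_msupp negbK => /eqP pa; rewrite big1 // => m' _.
    by rewrite pa !mul0r.
move=> g; rewrite mcoeff_mulE => nz.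
apply/negPn/negP => /norP[gne gnl]; move/eqP: nz; apply.
rewrite big1_seq // => m /andP[_ mp]; rewrite big1_seq // => m' /andP[_ m'q].
have [e|ne] := eqVneq (m + m')%MM g; last by rewrite mulr0.
rewrite mcoeff_msupp in mp; rewrite mcoeff_msupp in m'q.
move: (key _ _ mp m'q) => /orP[/andP[/eqP ea /eqP eb]|]; first by move: gne; rewrite -e ea eb eqxx.
by rewrite e (negbTE gnl).
Qed.

End Dom.

Section Dom2.
Variables (K : fieldType) (n : nat) (w : 'I_n -> int).
Local Notation domw := (@dom K n w).

Lemma dom1 : domw (1 : {mpoly K[n]}) 0%MM.
Proof. by move=> m; rewrite mcoeff1; case: (m == 0%MM); rewrite /= ?eqxx. Qed.

Lemma dom_prod (I : Type) (r : seq I) (P : I -> {mpoly K[n]}) (A : I -> 'X_{1..n}) :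
  (forall i, domw (P i) (A i)) ->
  (\prod_(i <- r) P i)@_(\big[mnm_add/0%MM]_(i <- r) A i) = \prod_(i <- r) (P i)@_(A i)
  /\ domw (\prod_(i <- r) P i) (\big[mnm_add/0%MM]_(i <- r) A i).
Proof.
move=> hd; elim: r => [|i r [IH1 IH2]].
  by rewrite !big_nil mcoeff1 eqxx; split=> //; exact: dom1.
rewrite !big_cons; have [e d] := @dom_mul K n w _ _ _ _ (hd i) IH2.
by rewrite e IH1.
Qed.

Lemma mcoeff_sign (b : bool) (p : {mpoly K[n]}) g :
  ((-1) ^+ b * p)@_g = (-1) ^+ b * p@_g.
Proof. by case: b; rewrite ?expr1 ?expr0 ?mulN1r ?mul1r // mcoeffN. Qed.

Lemma dom_det (M : 'M[{mpoly K[n]}]_n) (A : 'I_n -> 'X_{1..n}) :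
  (forall i j, domw (M i j) (A i)) ->
  (\det M)@_(\big[mnm_add/0%MM]_(i < n) A i) = \det (\matrix_(i, j) (M i j)@_(A i)).
Proof.
move=> hd; rewrite /determinant raddf_sum; apply: eq_bigr => s _ /=.
rewrite mcoeff_sign; congr (_ * _).
have [e _] := dom_prod _ (index_enum 'I_n) (fun i => M i ((s : 'S_n) i)) A (fun i => hd i ((s : 'S_n) i)).
by rewrite e; apply: eq_bigr => i _; rewrite mxE.
Qed.

End Dom2.

Section Euler.
Variables (K : fieldType) (n : nat).
Implicit Types (p : {mpoly K[n]}) (m g : 'X_{1..n}).

Lemma euler p (j : 'I_n) :
  'X_j * p^`M(j) = \sum_(m <- msupp p) (p@_m * (m j)%:R) *: 'X_[m].
Proof.
rewrite {1}(mpolyE p) raddf_sum big_distrr; apply: eq_bigr => m _ /=.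
rewrite mderivZ mderivX scalerA -scalerAr.
have [mj0|mjp] := posnP (m j); first by rewrite mj0 mulr0n mulr0 !scale0r.
congr (_ *: _).
rewrite -mpolyXD; congr ('X_[_]); apply/mnmP => i.
rewrite mnmDE mnmBE mnm1E; case: eqP => [<-|]; last by rewrite subn0.
by rewrite add1n subn1 prednK.
Qed.

Lemma mcoeff_euler p (j : 'I_n) g : ('X_j * p^`M(j))@_g = p@_g * (g j)%:R.
Proof.
rewrite euler raddf_sum /=.
rewrite (@sum_pred1 K _ _ g) /=.
- by rewrite mcoeffZ mcoeffX eqxx mulr1.
- exact: msupp_uniq.
- by move=> x _ xg; rewrite mcoeffZ mcoeffX (negbTE xg) mulr0.
- by rewrite mcoeffZ mcoeffX eqxx mulr1 mcoeff_msupp negbK => /eqP ->; rewrite mul0r.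
Qed.

Definition Mmat (G : 'I_n -> {mpoly K[n]}) : 'M[{mpoly K[n]}]_n :=
  \matrix_(i, j) ((i == j)%:R * G i + 'X_j * (G i)^`M(j)).

Lemma mcoeff_Mmat G i j g :
  (Mmat G i j)@_g = (G i)@_g * ((i == j) + g j)%:R.
Proof.
rewrite mxE mcoeffD mcoeff_euler mulr_natl mcoeffMn natrD mulrDr.
by rewrite [in RHS]mulr_natr.
Qed.


End Euler.

Section CS.
Variable n : nat.
Implicit Types (r v : 'X_{1..n}).

Definition sq v : int := \sum_j ((v j)%:Z) ^+ 2.
Definition dotp r v : int := \sum_j (r j)%:Z * (v j)%:Z.

Lemma cs_ident r v (a b : int) :
  \sum_j (b * (r j)%:Z - a * (v j)%:Z) ^+ 2 = b ^+ 2 * sq r - 2%:R * a * b * dotp r v + a ^+ 2 * sq v.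
Proof.
rewrite /sq /dotp !mulr_sumr -sumrB -big_split /=; apply: eq_bigr => j _.
ring.
Qed.

Lemma cs_ineq r v (a b : int) : 0 < a -> 0 < b ->
  sq v * a ^+ 2 <= sq r * b ^+ 2 ->
  a * dotp r v <= sq r * b /\
  (a * dotp r v = sq r * b -> forall j, b * (r j)%:Z = a * (v j)%:Z).
Proof.
move=> a0 b0 hq.
have X0 : 0 <= \sum_j (b * (r j)%:Z - a * (v j)%:Z) ^+ 2.
  by apply: sumr_ge0 => j _; exact: sqr_ge0.
rewrite cs_ident in X0.
split; first by nia.
move=> e j.
have X1 : \sum_j (b * (r j)%:Z - a * (v j)%:Z) ^+ 2 = 0.
  apply/eqP; rewrite eq_le; apply/andP; split; last by apply: sumr_ge0 => k _; exact: sqr_ge0.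
  rewrite cs_ident; nia.
move/eqP: X1; rewrite psumr_eq0; last by move=> k _; exact: sqr_ge0.
move=> /allP /(_ j (mem_index_enum _)) /=; rewrite sqrf_eq0 subr_eq0 => /eqP //.
Qed.

End CS.

Lemma det_rank1_neq0 (K : fieldType) n (U : 'cV[K]_n) (V : 'rV[K]_n) :
  1 + (V *m U) 0 0 != 0 -> \det (1%:M + U *m V) != 0.
Proof.
move=> h; set s := (V *m U) 0 0; set t := (1 + s)^-1.
have UVUV : U *m V *m (U *m V) = s *: (U *m V).
  by rewrite mulmxA -(mulmxA U V U) [V *m U]mx11_scalar mul_mx_scalar -scalemxAl.
have h2 : t *: (U *m V) + (t * s) *: (U *m V) = U *m V.
  by rewrite -scalerDl -{1}(mulr1 t) -mulrDr mulVf // scale1r.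
have e : (1%:M + U *m V) *m (1%:M - t *: (U *m V)) = 1%:M.
  rewrite mulmxDl mul1mx mulmxBr mulmx1 -scalemxAr UVUV scalerA.
  by rewrite -[X in _ + (X - _)]h2 addrK subrK.
apply/negP => /eqP d0; have := congr1 determinant e.
by rewrite det_mulmx d0 mul0r det1 => /eqP; rewrite eq_sym oner_eq0.
Qed.

Lemma argmax_seq (R : realDomainType) (T : eqType) (s : seq T) (f : T -> R) x0 :
  x0 \in s -> exists2 r, r \in s & forall v, v \in s -> f v <= f r.
Proof.
elim: s x0 => // x s IH x0 _.
case: (boolP (s == [::])) => [/eqP ->|sn].
  by exists x; rewrite ?mem_seq1 // => v; rewrite mem_seq1 => /eqP ->.
have [y ys hy] : exists2 r, r \in s & forall v, v \in s -> f v <= f r.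
  by case: s sn IH => // z s' _ /(_ z (mem_head _ _)).
case: (leP (f x) (f y)) => hxy.
  exists y; first by rewrite inE ys orbT.
  by move=> v; rewrite inE => /orP[/eqP ->|/hy].
exists x; first exact: mem_head.
move=> v; rewrite inE => /orP[/eqP ->//|/hy hv]; exact: (le_trans hv (ltW hxy)).
Qed.

Section Torus.
Variables (K : fieldType) (n : nat).
Local Notation Mm := (@Mmat K n).
Local Notation sqn := (@sq n).
Local Notation dotpn := (@dotp n).

Lemma mdegZ (m : 'X_{1..n}) : (mdeg m)%:Z = \sum_j (m j)%:Z.
Proof. by rewrite mdegE; apply: (big_morph Posz PoszD). Qed.

Lemma wt_neg1 (m : 'X_{1..n}) : wt n (fun _ => -1) m = - (mdeg m)%:Z.
Proof. by rewrite /wt mdegZ -sumrN; apply: eq_bigr => j _; rewrite mulN1r. Qed.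

Lemma ratle (x y b a : int) : 0 < b -> 0 < a ->
  (x%:~R / (b ^+ 2)%:~R <= y%:~R / (a ^+ 2)%:~R :> rat) -> x * a ^+ 2 <= y * b ^+ 2.
Proof.
move=> b0 a0; rewrite ler_pdivrMr ?ltr0z ?exprn_gt0 // mulrAC.
by rewrite ler_pdivlMr ?ltr0z ?exprn_gt0 // -!intrM ler_int.
Qed.

Lemma torus (G : 'I_n -> {mpoly K[n]}) (c : K) :
  [pchar K] =i pred0 -> c != 0 -> \det (Mm G) = c%:MP ->
  forall i, G i = ((G i)@_0)%:MP.
Proof.
move=> ch cn0 hdet.
have sum0 : \big[mnm_add/0%MM]_(i < n) (0%MM : 'X_{1..n}) = 0%MM by rewrite big1.
have g0 : forall i, (G i)@_0 != 0.
  have hd : forall i j, @dom K n (fun _ : 'I_n => -1) (Mm G i j) 0%MM.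
    move=> i j m; rewrite mcoeff_Mmat => nz.
    case: (eqVneq m 0%MM) => //= mn0.
    by rewrite wt_neg1 wt0 oppr_lt0 ltz_nat lt0n mdeg_eq0.
  have := @dom_det K n (fun _ => -1) (Mm G) (fun _ => 0%MM) hd.
  rewrite sum0 hdet mcoeffC eqxx mulr1.
  have -> : \matrix_(i, j) (Mm G i j)@_(0%MM) = diag_mx (\row_i (G i)@_0).
    by apply/matrixP => i j; rewrite [LHS]mxE mcoeff_Mmat !mxE mnm0E addn0 mulr_natr.
  rewrite det_diag => e i; apply/negP => /eqP z.
  by move: cn0; rewrite e (bigD1 i) //= mxE z mul0r eqxx.
have z0 : forall k, 0%MM \in msupp (G k) by move=> k; rewrite mcoeff_msupp g0.
move=> i; case: (boolP (has (fun m => m != 0%MM) (msupp (G i)))) => [hh|hh]; last first.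
  apply/mpolyP => m; rewrite mcoeffC; case: (eqVneq m 0%MM) => [->|mn0].
    by rewrite mulr1n mulr1.
  rewrite mulr0n mulr0; apply/eqP; rewrite mcoeff_eq0; apply: contra hh => mi.
  by apply/hasP; exists m.
exfalso.
set V := [seq m <- flatten [seq msupp (G k) | k <- enum 'I_n] | m != 0%MM].
have inV m k : m != 0%MM -> m \in msupp (G k) -> m \in V.
  move=> mn mk; rewrite mem_filter mn /=; apply/flatten_mapP; exists k => //.
  by rewrite mem_enum.
have Vinv m : m \in V -> m != 0%MM /\ exists k, m \in msupp (G k).
  by rewrite mem_filter => /andP[mn /flatten_mapP [k _ mk]]; split => //; exists k.
have [m0 m0s m0n] := hasP hh.
have m0V : m0 \in V by exact: inV m0n m0s.
pose Q := fun m : 'X_{1..n} => ((sqn m)%:~R / ((mdeg m)%:Z ^+ 2)%:~R : rat).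
have [r rV hr] := @argmax_seq rat _ V Q m0 m0V.
have [rn0 [k0 rk0]] := Vinv r rV.
set a := mdeg r.
have a0 : (0 < a)%N by rewrite lt0n mdeg_eq0.
set S := sqn r.
have hcs : forall v, v \in V -> (a%:Z * dotpn r v <= S * (mdeg v)%:Z) /\
   (a%:Z * dotpn r v = S * (mdeg v)%:Z -> forall j, (mdeg v)%:Z * (r j)%:Z = a%:Z * (v j)%:Z).
  move=> v vV; have [vn0 _] := Vinv v vV.
  have b0 : (0 < mdeg v)%N by rewrite lt0n mdeg_eq0.
  apply: cs_ineq; rewrite ?ltz_nat //.
  by apply: ratle; rewrite ?ltz_nat //; exact: hr.
set T := (\max_(v <- V) mdeg v).+1.
pose w := fun j : 'I_n => T%:Z * (a%:Z * (r j)%:Z - S) + 1.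
have wtE v : wt n w v = T%:Z * (a%:Z * dotpn r v - S * (mdeg v)%:Z) + (mdeg v)%:Z.
  rewrite /wt /dotp mdegZ !mulr_sumr -sumrB !mulr_sumr -big_split /=.
  by apply: eq_bigr => j _; rewrite /w; ring.
have Tgt v : v \in V -> (mdeg v < T)%N.
  by move=> vV; rewrite ltnS; exact: (@leq_bigmax_seq _ V xpredT (fun v => mdeg v) v).
pose onray v := (a%:Z * dotpn r v == S * (mdeg v)%:Z).
have on_wt v : onray v -> wt n w v = (mdeg v)%:Z.
  by move=> /eqP e; rewrite wtE e subrr mulr0 add0r.
have off_wt v : v \in V -> ~~ onray v -> wt n w v < 0.
  move=> vV off; have [hle _] := hcs v vV; have hT := Tgt v vV.
  have hlt : a%:Z * dotpn r v < S * (mdeg v)%:Z by rewrite lt_neqAle off hle.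
  rewrite wtE; move: hlt hT; set x := a%:Z * dotpn r v; set y := S * (mdeg v)%:Z.
  move=> hlt hT; have hT' : (mdeg v)%:Z < T%:Z by rewrite ltz_nat.
  nia.
have on_prop v : v \in V -> onray v -> forall j, (mdeg v)%:Z * (r j)%:Z = a%:Z * (v j)%:Z.
  by move=> vV /eqP e; have [_ h] := hcs v vV; exact: h.
have exa : forall k, exists m, (m \in msupp (G k)) &&
    all (fun m' => wt n w m' <= wt n w m) (msupp (G k)).
  move=> k; have [m ms hm] := @argmax_seq int _ _ (wt n w) _ (z0 k).
  by exists m; rewrite ms; apply/allP => m' /hm.
pose al := fun k => xchoose (exa k).
have als k : al k \in msupp (G k) by have /andP[] := xchooseP (exa k).
have almax k m : m \in msupp (G k) -> wt n w m <= wt n w (al k).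
  by have /andP[_ /allP] := xchooseP (exa k); apply.
have alcase k : (al k == 0%MM) || ((al k \in V) && onray (al k)).
  case: eqVneq => //= an0.
  have aV : al k \in V by apply: inV an0 (als k).
  rewrite aV /=; apply/negPn/negP => off.
  have h2 := off_wt _ aV off; have := almax k 0%MM (z0 k); rewrite wt0 => h1.
  by have := le_lt_trans h1 h2; rewrite ltxx.
have alprop k j : (mdeg (al k))%:Z * (r j)%:Z = a%:Z * (al k j)%:Z.
  case/orP: (alcase k) => [/eqP ->|/andP[aV on]]; first by rewrite mdeg0 mnm0E !mulr0 mul0r.
  exact: on_prop.
have aldom k : @dom K n w (G k) (al k).
  move=> m nz; have ms : m \in msupp (G k) by rewrite mcoeff_msupp.
  case: eqVneq => //= ma; rewrite lt_neqAle almax // andbT.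
  apply/eqP => e; move/eqP: ma; apply.
  case: (eqVneq m 0%MM) => [m0'|mn0].
    case/orP: (alcase k) => [/eqP ->//|/andP[aV ona]].
    move: e; rewrite m0' wt0 on_wt // => /eqP; rewrite eq_sym eqz_nat mdeg_eq0 => /eqP a0'.
    by have [] := Vinv _ aV; rewrite a0' eqxx.
  have mV : m \in V by exact: inV mn0 ms.
  case: (boolP (onray m)) => [onm|offm]; last first.
    have h2 := off_wt _ mV offm; have := almax k 0%MM (z0 k); rewrite wt0 -e => h1.
    by have := le_lt_trans h1 h2; rewrite ltxx.
  case/orP: (alcase k) => [/eqP a0'|/andP[aV ona]].
    move: e; rewrite a0' wt0 on_wt // => /eqP; rewrite eqz_nat mdeg_eq0 => m0'.
    by move: mn0; rewrite m0'.
  move: e; rewrite !on_wt // => /eqP; rewrite eqz_nat => /eqP md.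
  apply/mnmP => j; have h1 := on_prop _ mV onm j; have h2 := on_prop _ aV ona j.
  rewrite md h2 in h1; apply/eqP; rewrite -eqz_nat; apply/eqP.
  by apply: (mulfI (x := a%:Z)); rewrite ?eqz_nat -?lt0n //; rewrite h1.
have onr : onray r.
  by rewrite /onray /dotp /sq; apply/eqP; rewrite -/(sqn r) /S -/(sqn r) mulrC; congr (_ * _);
     apply: eq_bigr => j _; rewrite expr2.
have alk0 : al k0 != 0%MM.
  have h := almax k0 r rk0; rewrite on_wt // in h.
  apply/eqP => e; move: h; rewrite e wt0 lez_nat leqn0 => /eqP ha.
  by move: a0; rewrite /a ha.
set gam := \big[mnm_add/0%MM]_(k < n) al k.
have gn0 : gam != 0%MM.
  rewrite -mdeg_eq0 /gam mdeg_sum -lt0n (bigD1 k0) //=.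
  by rewrite ltn_addr // lt0n mdeg_eq0.
have an0 : (a%:R : K) != 0 by move/pcharf0P: ch => ->; rewrite -lt0n.
have propK k j : (mdeg (al k))%:R / a%:R * (r j)%:R = (al k j)%:R :> K.
  have e : (mdeg (al k) * r j = a * al k j)%N.
    by apply/eqP; rewrite -eqz_nat !PoszM alprop.
  by rewrite mulrAC -natrM e natrM mulrAC divff // mul1r.
have dm : forall i j, @dom K n w (Mm G i j) (al i).
  move=> i' j m; rewrite mcoeff_Mmat => nz; apply: aldom.
  by apply: contraNneq nz => ->; rewrite mul0r.
have := @dom_det K n w (Mm G) al dm.
rewrite hdet mcoeffC (negbTE gn0) mulr0.
pose U : 'cV[K]_n := \col_k ((mdeg (al k))%:R / a%:R).
pose W : 'rV[K]_n := \row_j ((r j)%:R).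
have -> : \matrix_(i, j) (Mm G i j)@_(al i) =
    diag_mx (\row_k (G k)@_(al k)) *m (1%:M + U *m W).
  apply/matrixP => i' j; rewrite mul_diag_mx [LHS]mxE mcoeff_Mmat !mxE big_ord1 !mxE.
  by rewrite propK natrD.
rewrite det_mulmx det_diag => /esym /eqP; rewrite mulf_eq0 => /orP[|].
  rewrite prodf_seq_eq0 => /hasP [k _]; rewrite mxE => /eqP z.
  by move: (als k); rewrite mcoeff_msupp z eqxx.
apply/negP/det_rank1_neq0.
rewrite mxE (eq_bigr (fun j => (al j j)%:R)); last first.
  by move=> j _; rewrite !mxE mulrC propK.
rewrite -natr_sum nat1r.
by move/pcharf0P: ch => ->.
Qed.

End Torus.

Section Chain.
Variables (K : fieldType) (n : nat).
Implicit Types (p q : {mpoly K[n]}) (lq lr : n.-tuple {mpoly K[n]}).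

Lemma comp_assoc p lq lr :
  (p \mPo lq) \mPo lr = p \mPo [tuple (tnth lq i \mPo lr) | i < n].
Proof.
rewrite (comp_mpolyE p lq) (comp_mpolyE p) raddf_sum; apply: eq_bigr => m _.
rewrite /= comp_mpolyZ rmorph_prod; congr (_ *: _); apply: eq_bigr => i _.
by rewrite rmorphXn tnth_mktuple.
Qed.

Section CR.
Variables (lq : n.-tuple {mpoly K[n]}) (j : 'I_n).
Definition CR p := (p \mPo lq)^`M(j) = \sum_k (p^`M(k) \mPo lq) * (tnth lq k)^`M(j).

Lemma CR0 : CR 0.
Proof. by rewrite /CR comp_mpoly0 mderiv0 big1 // => k _; rewrite mderiv0 comp_mpoly0 mul0r. Qed.

Lemma CRD p q : CR p -> CR q -> CR (p + q).
Proof.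
rewrite /CR => hp hq; rewrite comp_mpolyD mderivD hp hq -big_split /=.
by apply: eq_bigr => k _; rewrite mderivD comp_mpolyD mulrDl.
Qed.

Lemma CRZ c p : CR p -> CR (c *: p).
Proof.
rewrite /CR => hp; rewrite comp_mpolyZ mderivZ hp scaler_sumr.
by apply: eq_bigr => k _; rewrite mderivZ comp_mpolyZ scalerAl.
Qed.

Lemma CR1 : CR 1.
Proof.
rewrite /CR comp_mpoly1 -mpolyC1 mderivC big1 // => k _.
by rewrite mderivC comp_mpolyC mpolyC0 mul0r.
Qed.

Lemma CRM p q : CR p -> CR q -> CR (p * q).
Proof.
rewrite /CR => hp hq; rewrite rmorphM mderivM hp hq mulr_suml mulr_sumr -big_split /=.
apply: eq_bigr => k _; rewrite mderivM comp_mpolyD !rmorphM /=.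
ring.
Qed.

Lemma CRX i : CR 'X_i.
Proof.
rewrite /CR comp_mpolyXU -tnth_nth (bigD1 i) //= big1 ?addr0.
  rewrite mderivX mnm1E eqxx.
  have -> : (U_(i) - U_(i))%MM = 0%MM by apply/mnmP => l; rewrite mnmBE mnm0E subnn.
  by rewrite mulr1n mpolyX0 scale1r comp_mpoly1 mul1r.
move=> k ki; rewrite mderivX mnm1E eq_sym (negbTE ki) scale0r comp_mpoly0 mul0r //.
Qed.

Lemma CR_all p : CR p.
Proof.
rewrite (mpolyE p); apply: (big_ind CR CR0 CRD) => m _; apply: CRZ.
rewrite mpolyXE_id; apply: (big_ind CR CR1 CRM) => i _.
elim: (m i) => [|k IH]; first by rewrite expr0; exact: CR1.
by rewrite exprS; apply: CRM => //; exact: CRX.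
Qed.
End CR.

Lemma chain p lq j :
  (p \mPo lq)^`M(j) = \sum_k (p^`M(k) \mPo lq) * (tnth lq k)^`M(j).
Proof. exact: CR_all. Qed.

Lemma jac_comp (F : 'I_n -> {mpoly K[n]}) lq :
  jacobian (fun i => F i \mPo lq) =
  map_mx (comp_mpoly lq) (jacobian F) *m jacobian (fun k => tnth lq k).
Proof.
apply/matrixP => i j; rewrite !mxE chain; apply: eq_bigr => k _.
by rewrite !mxE.
Qed.

End Chain.

Section Lin.
Variables (K : fieldType) (n : nat).
Implicit Types (p q : {mpoly K[n]}) (m : 'X_{1..n}).

Lemma U_eq (i k : 'I_n) : (U_(i) == (U_(k)%MM) :> 'X_{1..n})%MM = (i == k).
Proof.
apply/eqP/eqP => [/mnmP /(_ i)|->//]; rewrite !mnm1E eqxx.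
by case: eqP.
Qed.

Lemma mcoeff_lin p m :
  ((p@_0)%:MP + \sum_k (p@_(U_(k)%MM)) *: 'X_k)@_m =
  if mdeg m == 0%N then p@_0 else if mdeg m == 1%N then p@_m else 0.
Proof.
rewrite mcoeffD mcoeffC raddf_sum /=.
have hs : forall k, ((p@_(U_(k)%MM)) *: ('X_k : {mpoly K[n]}))@_m = p@_(U_(k)%MM) * ((U_(k) == m)%MM)%:R.
  by move=> k; rewrite mcoeffZ mcoeffX.
rewrite (eq_bigr _ (fun k _ => hs k)).
case: (eqVneq (mdeg m) 0%N) => [/eqP|] md0.
  rewrite mdeg_eq0 in md0; rewrite md0 mulr1 big1 ?addr0 // => k _.
  by rewrite (eqP md0) mnm1_eq0 mulr0.
have mn0 : (m == 0%MM) = false by apply/negbTE; rewrite -mdeg_eq0.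
rewrite mn0 mulr0 add0r.
case: (eqVneq (mdeg m) 1%N) => [/eqP /mdeg1P [i /eqP ->]|md1].
  rewrite (bigD1 i) //= U_eq eqxx mulr1 big1 ?addr0 // => k ki.
  by rewrite U_eq (negbTE ki) mulr0.
rewrite big1 // => k _; case: eqP => [e|]; last by rewrite mulr0.
by move: md1; rewrite -e mdeg1 eqxx.
Qed.

Lemma linform p : (msize p <= 2)%N -> p = (p@_0)%:MP + \sum_k (p@_(U_(k)%MM)) *: 'X_k.
Proof.
move=> hs; apply/mpolyP => m; rewrite mcoeff_lin.
case: (eqVneq (mdeg m) 0%N) => [/eqP|] md0.
  by rewrite mdeg_eq0 in md0; rewrite (eqP md0).
case: (eqVneq (mdeg m) 1%N) => // md1.
apply/eqP; rewrite mcoeff_eq0; apply: msize_mdeg_ge; apply: (leq_trans hs).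
by case: (mdeg m) md0 md1 => [|[|]].
Qed.

Lemma mderivXU (k j : 'I_n) : ('X_k : {mpoly K[n]})^`M(j) = (k == j)%:R.
Proof.
rewrite mderivX mnm1E; case: eqP => [->|_]; last by rewrite scale0r.
have -> : ((U_(j)%MM) - (U_(j)%MM))%MM = 0%MM by apply/mnmP => l; rewrite mnmBE mnm0E subnn.
by rewrite mpolyX0 scale1r.
Qed.

Lemma lin_deriv p j : (msize p <= 2)%N -> p^`M(j) = (p@_(U_(j)%MM))%:MP.
Proof.
move=> hs; rewrite {1}(linform p hs) mderivD mderivC add0r raddf_sum /=.
rewrite (bigD1 j) //= big1 ?addr0.
  by rewrite mderivZ mderivXU eqxx -mul_mpolyC mulr1.
by move=> k kj; rewrite mderivZ mderivXU (negbTE kj) scaler0.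
Qed.

Lemma prod0pow m : \prod_i ((0 : K) ^+ (m i)) = (m == 0%MM)%:R.
Proof.
case: (eqVneq m 0%MM) => [->|mn].
  by rewrite big1 // => i _; rewrite mnm0E expr0.
case: (boolP [forall i, m i == 0%N]) => [/forallP h|/forallPn [i hi]].
  have m0 : m = 0%MM by apply/mnmP => i; rewrite mnm0E; apply/eqP; exact: h.
  by rewrite m0 eqxx in mn.
by rewrite (bigD1 i) //= expr0n (negbTE hi) mul0r.
Qed.

Lemma at0E p : p.@[fun _ => 0] = p@_0.
Proof.
rewrite mevalE (@sum_pred1 K _ _ 0%MM) ?msupp_uniq //.
- by rewrite prod0pow eqxx mulr1.
- by move=> x _ x0; rewrite prod0pow (negbTE x0) mulr0.
- by rewrite mcoeff_msupp negbK => /eqP ->; rewrite mul0r.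
Qed.

Lemma evlin p pt : (msize p <= 2)%N ->
  p.@[pt] = p@_0 + \sum_k p@_(U_(k)%MM) * pt k.
Proof.
move=> hs; rewrite {1}(linform p hs) mevalD mevalC raddf_sum /=.
by congr (_ + _); apply: eq_bigr => k _; rewrite mevalZ mevalXU.
Qed.

Lemma ev_deriv0 p j : (p^`M(j)).@[fun _ => 0] = p@_(U_(j)%MM).
Proof. by rewrite at0E mcoeff_mderiv add0m mnm0E mulr1n. Qed.

Lemma linpart_coef p j : (linpart p)@_(U_(j)%MM) = p@_(U_(j)%MM).
Proof.
rewrite /linpart pihomogE big_mkcond raddf_sum /=.
rewrite (@sum_pred1 K _ _ (U_(j)%MM)) ?msupp_uniq //.
- by rewrite mdeg1 eqxx mcoeffZ mcoeffX eqxx mulr1.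
- move=> x _ xj; case: ifP => _; last by rewrite mcoeff0.
  by rewrite mcoeffZ mcoeffX (negbTE xj) mulr0.
- by rewrite mcoeff_msupp negbK mdeg1 eqxx => /eqP ->; rewrite scale0r mcoeff0.
Qed.

Lemma linpart_const c : linpart (c%:MP : {mpoly K[n]}) = 0.
Proof.
rewrite /linpart pihomogE msuppC; case: (c == 0); first by rewrite big_nil.
by rewrite big_mkcond big_seq1 /= mdeg0.
Qed.

End Lin.

Section Gen.
Variables (K : fieldType) (n : nat).
Implicit Types (p q : {mpoly K[n]}).

Lemma unit_const p : p \is a GRing.unit -> p = (p@_0)%:MP.
Proof. by rewrite unfold_in /= /mpoly_unit => /andP[/eqP e _]. Qed.

Lemma unit_msize p : p \is a GRing.unit -> (msize p <= 1)%N.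
Proof. by move/unit_const => ->; rewrite msizeC; case: (_ != 0). Qed.

Lemma msize1_unit p : msize p = 1%N -> p \is a GRing.unit.
Proof.
move/eqP/msize_poly1P => [c cn0 ->]; apply: rmorph_unit; by rewrite unitfE.
Qed.

Lemma jac_ext (F1 F2 : 'I_n -> {mpoly K[n]}) : (forall i, F1 i = F2 i) ->
  jacobian F1 = jacobian F2.
Proof. by move=> e; apply/matrixP => i j; rewrite !mxE e. Qed.

Lemma keller_nonconst (F : 'I_n -> {mpoly K[n]}) : keller F -> forall i, (1 < msize (F i))%N.
Proof.
move=> [c cn0 hc] i; rewrite ltnNge; apply/negP => /msize1_polyC e.
move: hc; rewrite (expand_det_row _ i) big1 => [/esym /eqP|j _].
  by rewrite mpolyC_eq0 (negbTE cn0).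
by rewrite mxE e mderivC mul0r.
Qed.

Lemma Xn0 (i : 'I_n) : ('X_i : {mpoly K[n]}) != 0.
Proof. by apply/eqP => /(congr1 (mcoeff (U_(i)%MM))); rewrite mcoeffX eqxx mcoeff0 => /eqP; rewrite oner_eq0. Qed.

Lemma matcomb (A B : 'M[K]_n) (Y : 'I_n -> {mpoly K[n]}) i : A *m B = 1%:M ->
  \sum_k A i k *: \sum_j B k j *: Y j = Y i.
Proof.
move=> e.
transitivity (\sum_j (A *m B) i j *: Y j).
  rewrite (eq_bigr (fun k => \sum_j (A i k * B k j) *: Y j)); last first.
    by move=> k _; rewrite scaler_sumr; apply: eq_bigr => j _; rewrite scalerA.
  by rewrite exchange_big /=; apply: eq_bigr => j _; rewrite mxE scaler_suml.
rewrite e (bigD1 i) //= big1 ?addr0 => [|j ji]; first by rewrite mxE eqxx mulr1n scale1r.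
by rewrite mxE eq_sym (negbTE ji) mulr0n scale0r.
Qed.

End Gen.

Section Main.
Variables (K : fieldType) (n : nat) (F L H : 'I_n -> {mpoly K[n]}).
Hypothesis ch : [pchar K] =i pred0.
Hypothesis n0 : (0 < n)%N.
Hypothesis kel : keller F.
Hypothesis hFLH : forall i, F i = L i * H i.
Hypothesis hL : forall i, mdegree (L i) = 1%N.

Lemma msL i : msize (L i) = 2%N.
Proof. by move: (hL i); rewrite /mdegree; case: (msize (L i)) => [|[|[|]]]. Qed.

Lemma msL2 i : (msize (L i) <= 2)%N.
Proof. by rewrite msL. Qed.

Definition A := \matrix_(i, k) (L i)@_(U_(k)%MM).

Lemma JL : jacobian L = map_mx (@mpolyC n K) A.
Proof. by apply/matrixP => i j; rewrite !mxE lin_deriv ?msL2. Qed.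

Lemma detA_from pt (be : 'rV[K]_n) :
  map_mx (meval pt) (jacobian F) = diag_mx be *m A -> \det A != 0.
Proof.
move=> e; have [c cn0 hc] := kel.
have := det_map_mx (meval pt) (jacobian F).
rewrite e hc /= mevalC det_mulmx det_diag => h.
by apply/negP => /eqP d0; move: cn0; rewrite -h d0 mulr0 eqxx.
Qed.

Lemma evJF pt i j : (map_mx (meval pt) (jacobian F)) i j =
  A i j * (H i).@[pt] + (L i).@[pt] * ((H i)^`M(j)).@[pt].
Proof.
by rewrite !mxE hFLH mderivM mevalD !mevalM lin_deriv ?msL2 // mevalC.
Qed.

Lemma h1_detA : (forall i, exists q : {mpoly K[n]},
   linpart ((at0 (L i))%:MP * H i) = q * (L i - (at0 (L i))%:MP)) -> \det A != 0.
Proof.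
move=> h.
have hq : forall i, exists b : K, [forall j : 'I_n,
   at0 (L i) * ((H i)^`M(j)).@[fun _ => 0] == b * A i j].
  move=> i; have [q e] := h i; exists q.@[fun _ => 0]; apply/forallP => j; apply/eqP.
  rewrite ev_deriv0 -mcoeffCM -linpart_coef e -ev_deriv0 mderivM mevalD !mevalM.
  rewrite mderivB mderivC subr0 [(L i)^`M(j)]lin_deriv ?msL2 //= mevalC mevalB mevalC.
  by rewrite /at0 subrr mulr0 add0r mxE.
pose be := \row_i ((H i).@[fun _ => 0] + xchoose (hq i)).
apply: (@detA_from (fun _ => 0) be); apply/matrixP => i j.
rewrite evJF mul_diag_mx !mxE.
have /forallP /(_ j) /eqP := xchooseP (hq i); rewrite /at0 => ->.
by rewrite mxE mulrDl mulrC.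
Qed.
Lemma at0L i : at0 (L i) = (L i)@_0.
Proof. exact: at0E. Qed.

Lemma h2_detA : (exists v : 'cV[K]_n,
   jacobian L *m map_mx (@mpolyC n K) v = \col_i (at0 (L i))%:MP) -> \det A != 0.
Proof.
move=> [v hv]; rewrite JL -map_mxM in hv.
have Av i : (A *m v) i 0 = (L i)@_0.
  move/matrixP: hv => /(_ i 0); rewrite !mxE /= at0L.
  by move/(congr1 (mcoeff 0%MM)); rewrite !mcoeffC eqxx !mulr1.
pose pt := fun k => - v k 0.
have Lpt i : (L i).@[pt] = 0.
  rewrite evlin ?msL2 // -Av mxE -big_split big1 // => k _.
  by rewrite /pt !mxE mulrN /= subrr.
apply: (@detA_from pt (\row_i (H i).@[pt])); apply/matrixP => i j.
by rewrite evJF mul_diag_mx !mxE Lpt mul0r addr0 mulrC.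
Qed.

Lemma detA_3 : \det A != 0 -> exists2 c, c != 0 & \det (jacobian L) = c%:MP.
Proof. by move=> h; exists (\det A) => //; rewrite JL det_map_mx. Qed.

Lemma h3_detA : (exists2 c, c != 0 & \det (jacobian L) = c%:MP) -> \det A != 0.
Proof.
move=> [c cn0]; rewrite JL det_map_mx => /(congr1 (mcoeff 0%MM)).
by rewrite !mcoeffC eqxx !mulr1 => ->.
Qed.

Lemma detA_2 : \det A != 0 -> exists v : 'cV[K]_n,
   jacobian L *m map_mx (@mpolyC n K) v = \col_i (at0 (L i))%:MP.
Proof.
move=> h; exists (invmx A *m \col_i (L i)@_0).
have uA : A \in unitmx by rewrite unitmxE unitfE.
rewrite JL -map_mxM mulmxA mulmxV // mul1mx; apply/matrixP => i j.
by rewrite !mxE at0L.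
Qed.

Lemma h4_5 : map_degree F = 1%N -> forall i, mirreducible (F i).
Proof.
move=> hm i.
have nc := @keller_nonconst K n F kel i.
have le : (msize (F i) <= 2)%N.
  have := @leq_bigmax _ (fun k => mdegree (F k)) i.
  rewrite /map_degree in hm; rewrite hm /mdegree.
  by case: (msize (F i)) => [|[|[|]]].
have e2 : msize (F i) = 2%N by apply/eqP; rewrite eqn_leq le nc.
split.
- by rewrite -msize_poly_eq0 e2.
- by apply/negP => /unit_msize; rewrite e2.
move=> a b e.
have an0 : a != 0 by apply/eqP => a0; move: e2; rewrite e a0 mul0r msize0.
have bn0 : b != 0 by apply/eqP => b0; move: e2; rewrite e b0 mulr0 msize0.
have := msizeM an0 bn0; rewrite -e e2 => h.
have sa : (0 < msize a)%N by rewrite lt0n msize_poly_eq0.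
have sb : (0 < msize b)%N by rewrite lt0n msize_poly_eq0.
case: (eqVneq (msize a) 1%N) => [ha|ha]; first by left; exact: msize1_unit.
right; apply: msize1_unit.
move: h sa sb ha; case: (msize a) => [|[|[|k]]]; case: (msize b) => [|[|[|l]]] => //; rewrite ?addnS ?addSn /=; lia.
Qed.

Lemma h5_1 : (forall i, mirreducible (F i)) -> forall i, exists q : {mpoly K[n]},
   linpart ((at0 (L i))%:MP * H i) = q * (L i - (at0 (L i))%:MP).
Proof.
move=> hi i; have [_ _ hu] := hi i.
case: (hu _ _ (hFLH i)) => [/unit_msize|/unit_const he]; first by rewrite msL.
by exists 0; rewrite mul0r he -rmorphM /= linpart_const.
Qed.

Lemma h3_4 : \det A != 0 -> map_degree F = 1%N.
Proof.
move=> dA.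
have uA : A \in unitmx by rewrite unitmxE unitfE.
set B := invmx A.
pose cc := fun j : 'I_n => (L j)@_0.
pose phi := fun k : 'I_n => \sum_j B k j *: ('X_j - (cc j)%:MP).
pose lq := [tuple phi k | k < n].
have tq k : tnth lq k = phi k by rewrite tnth_mktuple.
have Lq i : L i \mPo lq = 'X_i.
  rewrite {1}(@linform K n (L i) (msL2 i)) comp_mpolyD comp_mpolyC raddf_sum /=.
  have -> : \sum_k (((L i)@_(U_(k)%MM) *: 'X_k) \mPo lq) = \sum_k A i k *: phi k.
    by apply: eq_bigr => k _; rewrite comp_mpolyZ comp_mpolyXU -tnth_nth tq mxE.
  by rewrite /phi matcomb ?mulmxV // addrC subrK.
have lqD k j : (tnth lq k)^`M(j) = (B k j)%:MP.
  rewrite tq /phi raddf_sum /= (bigD1 j) //= big1 ?addr0.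
    by rewrite mderivZ mderivB mderivC subr0 mderivXU eqxx mulr1n -mul_mpolyC mulr1.
  by move=> l lj; rewrite mderivZ mderivB mderivC subr0 mderivXU (negbTE lj) mulr0n scaler0.
have JLq : jacobian (fun k => tnth lq k) = map_mx (@mpolyC n K) B.
  by apply/matrixP => k j; rewrite !mxE lqD.
pose G := fun i => H i \mPo lq.
have [c cn0 hc] := kel.
have dF' : \det (jacobian (fun i => 'X_i * G i)) = (c * \det B)%:MP.
  rewrite -(@jac_ext K n (fun i => F i \mPo lq)) => [|i]; last by rewrite hFLH rmorphM /= Lq.
  rewrite jac_comp det_mulmx det_map_mx hc /= comp_mpolyC JLq det_map_mx /=.
  by rewrite rmorphM.
have dB : \det B != 0 by rewrite det_inv invr_eq0.
have dM : \det (@Mmat K n G) = (c * \det B)%:MP.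
  set D := diag_mx (\row_i ('X_i : {mpoly K[n]})).
  have rel : jacobian (fun i => 'X_i * G i) *m D = D *m @Mmat K n G.
    apply/matrixP => i j; rewrite mul_mx_diag mul_diag_mx !mxE mderivM mderivXU.
    by case: (eqVneq i j) => [<-|ij]; rewrite ?mulr1n ?mulr0n; ring.
  have dD : \det D != 0.
    by rewrite det_diag; apply/prodf_neq0 => i _; rewrite mxE Xn0.
  have := congr1 determinant rel; rewrite !det_mulmx dF' => e.
  by apply: (mulfI dD); rewrite -e mulrC.
have hG := @torus K n G (c * \det B) ch (mulf_neq0 cn0 dB) dM.
pose lr := [tuple L k | k < n].
have lqr k : tnth lq k \mPo lr = 'X_k.
  rewrite tq /phi raddf_sum /=.
  have -> : \sum_j ((B k j *: ('X_j - (cc j)%:MP)) \mPo lr) =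
            \sum_j B k j *: \sum_m A j m *: 'X_m.
    apply: eq_bigr => j _; rewrite comp_mpolyZ comp_mpolyB comp_mpolyC comp_mpolyXU.
    rewrite -tnth_nth tnth_mktuple; congr (_ *: _).
    rewrite {1}(@linform K n (L j) (msL2 j)) /cc addrC addKr.
    by apply: eq_bigr => m _; rewrite mxE.
  by apply: matcomb; rewrite mulVmx.
have HG i : H i = ((G i)@_0)%:MP.
  have := @comp_assoc K n (H i) lq lr; rewrite -/(G i) {1}(hG i) comp_mpolyC.
  have -> : [tuple (tnth lq k \mPo lr) | k < n] = [tuple 'X_k | k < n].
    by apply: eq_mktuple => k; exact: lqr.
  by rewrite comp_mpoly_id => ->.
have msF i : (msize (F i) <= 2)%N.
  by rewrite hFLH HG mulrC mul_mpolyC (leq_trans (msizeZ_le _ _)) ?msL2.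
apply/eqP; rewrite eqn_leq; apply/andP; split.
  apply/bigmax_leqP => i _; rewrite /mdegree; have := msF i.
  by case: (msize (F i)) => [|[|[|]]].
apply: (leq_trans _ (@leq_bigmax _ (fun k => mdegree (F k)) (Ordinal n0))).
rewrite /mdegree; have := @keller_nonconst K n F kel (Ordinal n0).
by case: (msize (F (Ordinal n0))) => [|[|]].
Qed.

End Main.

Theorem theorem2p3 (K : fieldType) (n : nat)
  (F L H : 'I_n -> {mpoly K[n]}) :
  [pchar K] =i pred0 ->
  (0 < n)%N ->
  keller F ->
  (forall i, F i = L i * H i) ->
  (forall i, mdegree (L i) = 1%N) ->
  [<-> (forall i, exists q : {mpoly K[n]},
           linpart ((at0 (L i))%:MP * H i) = q * (L i - (at0 (L i))%:MP));
       (exists v : 'cV[K]_n,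
           jacobian L *m map_mx (@mpolyC n K) v
           = \col_i (at0 (L i))%:MP);
       (exists2 c : K, c != 0 & \det (jacobian L) = c%:MP);
       map_degree F = 1%N;
       (forall i, mirreducible (F i))].
Proof.
move=> ch n0 kel hFLH hL.
tfae.
- move=> h; eapply detA_2; [eassumption|]; eapply h1_detA; eassumption.
- move=> h; eapply detA_3; [eassumption|]; eapply h2_detA; eassumption.
- move=> h; eapply h3_4; try eassumption; eapply h3_detA; eassumption.
- move=> h; eapply h4_5; eassumption.
- move=> h; eapply h5_1; eassumption.
Qed.
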